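(* Let $x=\tilde w\ell$ with $\tilde w\in\widetilde W$ satisfying $\tilde w\alpha>0$ for all $\alpha\in\Delta(L)$ and $\ell=wu$ with $w\in W_L$, $u\in\Upsilon$. Then $$B_\phi\cap x^{-1}I^-x=B_\phi\cap\ell^{-1}B_L^-\ell=\{tv\in T_\phi U_\phi:\ (t^{-1}ut)vu^{-1}\in U_L\cap w^{-1}U_L^-w\}.$$
   Context: $k$ a field, $G=\mathrm{GL}_n$; $I^-=\{g\in\mathrm{GL}_n(k[s^{-1}]):g|_{s^{-1}=0}\text{ lower triangular}\}$, $I\subset\mathrm{GL}_n(k[[s]])$ preimage of upper triangular matrices; affine roots $\alpha_{ij}+r$ with root subgroups $\{1+as^rE_{ij}\}$, positive if contained in $I$; $\widetilde W$ = monomial matrices $w\,\mathrm{diag}(s^{\lambda_i})$. Fix $1\le d\le n$, $m=n-d$. $L\subset\mathrm{GL}_n(k((s)))$ is generated by the diagonal torus $T(k)$ and $\{1+as^{(i-j)/d}E_{ij}\}$ for $i\equiv j\bmod d$, $i\neq j$; $L\simeq G_0=\{g\in\mathrm{GL}_n(k):g_{ij}=0\text{ unless }i\equiv j\bmod d\}$ via $s^{(i-j)/d}E_{ij}\mapsto E_{ij}$. $\Delta(L)=\{\alpha_{i,i+d}-1\}$; $W_L$ the Weyl group of $L$ (its permutation matrices); $U_L$ (resp. $U_L^-$) generated by the root subgroups of $L$ with $i<j$ (resp. $i>j$); $B_L^-=T(k)U_L^-$. $B_\phi\subset L$ corresponds to $\{\mathrm{diag}(\mathrm{Id}_d,b):b\in\mathrm{GL}_m\text{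 upper triangular}\}\cap G_0$, with torus $T_\phi$ and unipotent radical $U_\phi$. $\Upsilon=\prod U_\alpha$ over the root subgroups of $L$ with finite part $\alpha_{ij}$, $1\le i\le d$, $i+d\le j\le n$, $j\equiv i\bmod d$. *)

(* Defs.v *)
From HB Require Import structures.
From mathcomp Require Import all_boot all_order all_fingroup all_algebra.
Set Implicit Arguments. Unset Strict Implicit. Unset Printing Implicit Defensive.
Import Order.TTheory GRing.Theory Num.Theory.
Local Open Scope ring_scope.

(* Ambient field: F = k(s), the field of rational functions.  All matrices
   occurring in the statement have entries in k[s, s^-1], which embeds both in
   k(s) and in k((s)). *)
Section Defs.
Variable k : fieldType.
Local Notation F := {fraction {poly k}}.

Definition cst (c : k) : F := tofrac (c%:P).
Definition svar : F := tofrac ('X : {poly k}).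
Definition ev_inv (p : {poly k}) : F := (map_poly cst p).[svar^-1].

Variable n : nat.

Definition Emx (i j : 'I_n) : 'M[F]_n := delta_mx i j.

Definition rootelt (i j : 'I_n) (r : int) (a : k) : 'M[F]_n :=
  1%:M + (cst a * svar ^ r) *: Emx i j.

(* ---- the Iwahori I: preimage in GL_n(k[[s]]) of upper triangular matrices.
   An element of k(s) lies in k[[s]] iff it can be written p/q with q(0) <> 0. *)
Definition in_ps (f : F) : Prop :=
  exists p q : {poly k}, q.[0] != 0 /\ f = tofrac p / tofrac q.
Definition mx_ps (g : 'M[F]_n) : Prop := forall i j, in_ps (g i j).
Definition in_I (g : 'M[F]_n) : Prop :=
  [/\ g \in unitmx, mx_ps g, mx_ps (invmx g) &
   (* reduction mod s is upper triangular: *)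
   exists (P : 'M[{poly k}]_n) (q : {poly k}), q.[0] != 0 /\
     g = (tofrac q)^-1 *: map_mx (@tofrac {poly k}) P /\
     (forall i j : 'I_n, (j < i)%N -> (P i j).[0] = 0)].

(* ---- I^- = { g in GL_n(k[s^-1]) : g|_{s^-1 = 0} lower triangular } *)
Definition mx_kinv (g : 'M[F]_n) : Prop :=
  exists P : 'M[{poly k}]_n, g = map_mx ev_inv P.
Definition in_Iminus (g : 'M[F]_n) : Prop :=
  [/\ g \in unitmx, mx_kinv (invmx g) &
   exists P : 'M[{poly k}]_n, g = map_mx ev_inv P /\
     (forall i j : 'I_n, (i < j)%N -> (P i j).[0] = 0)].

(* ---- extended affine Weyl group: monomial matrices w diag(s^lambda_i) *)
Definition tW (sigma : 'S_n) (lam : 'I_n -> int) : 'M[F]_n :=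
  perm_mx sigma *m diag_mx (\row_i (svar ^ lam i)).

Variable d : nat.

(* ---- G_0 and the isomorphism iota : G_0 -> L,  E_ij |-> s^((i-j)/d) E_ij *)
Definition congr_d (i j : 'I_n) : bool := (i == j %[mod d])%N.
Definition in_G0 (g : 'M[k]_n) : Prop :=
  g \in unitmx /\ forall i j, ~~ congr_d i j -> g i j = 0.
Definition iotaL (g : 'M[k]_n) : 'M[F]_n :=
  \matrix_(i, j) (cst (g i j) * svar ^ ((i%:Z - j%:Z) %/ d%:Z)%Z).

Definition in_L (x : 'M[F]_n) : Prop := exists g, in_G0 g /\ x = iotaL g.
Definition in_T (x : 'M[F]_n) : Prop :=
  exists t : 'I_n -> k, (forall i, t i != 0) /\ x = diag_mx (\row_i cst (t i)).

(* Weyl group of L: (images in L of) the permutation matrices of G_0 *)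
Definition in_WL (x : 'M[F]_n) : Prop :=
  exists sigma : 'S_n, in_G0 (perm_mx sigma) /\ x = iotaL (perm_mx sigma).
Definition in_UL (x : 'M[F]_n) : Prop :=
  exists g, in_G0 g /\ x = iotaL g /\
    (forall i, g i i = 1) /\ (forall i j : 'I_n, (j < i)%N -> g i j = 0).
Definition in_ULm (x : 'M[F]_n) : Prop :=
  exists g, in_G0 g /\ x = iotaL g /\
    (forall i, g i i = 1) /\ (forall i j : 'I_n, (i < j)%N -> g i j = 0).
Definition in_BLm (x : 'M[F]_n) : Prop :=
  exists t u, in_T t /\ in_ULm u /\ x = t *m u.

(* B_phi : {diag(Id_d, b) : b in GL_m upper triangular} cap G_0, and its
   torus T_phi and unipotent radical U_phi (0-based indices: first d are Id) *)
Definition idblock (g : 'M[k]_n) : Prop :=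
  forall i j : 'I_n, ((i < d)%N || (j < d)%N) -> g i j = (i == j)%:R.
Definition in_Bphi (x : 'M[F]_n) : Prop :=
  exists g, in_G0 g /\ x = iotaL g /\ idblock g /\
    (forall i j : 'I_n, (j < i)%N -> g i j = 0).
Definition in_Tphi (x : 'M[F]_n) : Prop :=
  exists g, in_G0 g /\ x = iotaL g /\ idblock g /\
    (forall i j : 'I_n, i != j -> g i j = 0).
Definition in_Uphi (x : 'M[F]_n) : Prop :=
  exists g, in_G0 g /\ x = iotaL g /\ idblock g /\
    (forall i, g i i = 1) /\ (forall i j : 'I_n, (j < i)%N -> g i j = 0).

(* Upsilon = product of root subgroups of L with finite part alpha_ij,
   1 <= i <= d, i + d <= j <= n, j = i mod d (here 0-based: i < d, i + d <= j) *)
Definition in_Upsilon (x : 'M[F]_n) : Prop :=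
  exists g, in_G0 g /\ x = iotaL g /\
    (forall i j : 'I_n, g i j = (i == j)%:R \/
       [/\ i != j, (i < d)%N, (i + d <= j)%N & congr_d i j]).
End Defs.

(* Main.v *)
Require Import Defs.
From HB Require Import structures.
From mathcomp Require Import all_boot all_order all_fingroup all_algebra.
From mathcomp Require Import zify ring.
Import Order.TTheory GRing.Theory Num.Theory.
Local Open Scope ring_scope.
Set Implicit Arguments. Unset Strict Implicit.

Section Basics.
Variable k : fieldType.
Local Notation F := {fraction {poly k}}.
Local Notation s := (svar k).

Definition cstm : {rmorphism k -> F} := (@tofrac {poly k} \o @polyC k).
Lemma cstE (c : k) : cst c = cstm c. Proof. by []. Qed.
Lemma cst0 : @cst k 0 = 0. Proof. by rewrite cstE rmorph0. Qed.
Lemma cst1 : @cst k 1 = 1. Proof. by rewrite cstE rmorph1. Qed.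
Lemma cstD (a b : k) : cst (a + b) = cst a + cst b. Proof. by rewrite !cstE rmorphD. Qed.
Lemma cstM (a b : k) : cst (a * b) = cst a * cst b. Proof. by rewrite !cstE rmorphM. Qed.
Lemma cst_inj : injective (@cst k).
Proof. by move=> a b /eqP; rewrite /cst tofrac_eq => /eqP /polyC_inj. Qed.
Lemma cst_eq0 (a : k) : (cst a == 0) = (a == 0).
Proof. by rewrite /cst tofrac_eq0 polyC_eq0. Qed.

Lemma tofrac_inj : injective (@tofrac {poly k}).
Proof. by move=> a b /eqP; rewrite tofrac_eq => /eqP. Qed.

Lemma svarE : s = tofrac ('X : {poly k}). Proof. by []. Qed.
Lemma svar_neq0 : s != 0 :> F.
Proof. by rewrite /svar tofrac_eq0 polyX_eq0. Qed.
Lemma svarXn m : s ^+ m = tofrac ('X^m : {poly k}).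
Proof. by rewrite /svar tofracXn. Qed.
Lemma svarXn_inj a b : s ^+ a = s ^+ b :> F -> a = b.
Proof.
move=> /eqP; rewrite !svarXn tofrac_eq => /eqP E; have := congr1 (fun p : {poly k} => size p) E.
by rewrite /= !size_polyXn => -[].
Qed.
End Basics.

Lemma invmx_eq (R : comUnitRingType) m (A B : 'M[R]_m) : A *m B = 1%:M -> invmx A = B.
Proof.
move=> AB; have [uA _] := mulmx1_unit AB.
by rewrite -[invmx A]mulmx1 -AB mulmxA mulVmx // mul1mx.
Qed.

Section Iota.
Variable k : fieldType.
Local Notation F := {fraction {poly k}}.
Local Notation s := (svar k).
Variables n d : nat.
Hypothesis hd : (0 < d)%N.

Definition qz (i : 'I_n) : int := (i %/ d)%N.
Definition iotk (A : 'M[k]_n) : 'M[F]_n :=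
  \matrix_(i, j) (cst (A i j) * s ^ (qz i - qz j)).

Lemma iotkM A B : iotk A *m iotk B = iotk (A *m B).
Proof.
apply/matrixP => i j; rewrite !mxE cstE rmorph_sum big_distrl /=.
apply: eq_bigr => l _; rewrite !mxE; rewrite -[tofrac _]/(cst (A i l * B l j)) cstM.
have -> : qz i - qz j = (qz i - qz l) + (qz l - qz j) by ring.
rewrite (@expfzDr _ _ (qz i - qz l)) ?svar_neq0 //; exact: mulrACA.
Qed.

Lemma iotk1 : iotk 1%:M = 1%:M.
Proof.
apply/matrixP => i j; rewrite !mxE; case: eqP => [->|_].
  by rewrite subrr expr0z cst1 mulr1.
by rewrite cst0 mul0r.
Qed.

Lemma iotk_inj : injective iotk.
Proof.
move=> A B E; apply/matrixP => i j; have := congr1 (fun M : 'M_n => M i j) E.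
rewrite !mxE => /(mulIf (expfz_neq0 _ (svar_neq0 k))); exact: cst_inj.
Qed.

Lemma iotk_unit A : A \in unitmx -> iotk A \in unitmx /\ invmx (iotk A) = iotk (invmx A).
Proof.
move=> uA; have E : iotk A *m iotk (invmx A) = 1%:M.
  by rewrite iotkM (mulmxV uA) iotk1.
split; [exact: (proj1 (mulmx1_unit E)) | exact: invmx_eq E].
Qed.

Lemma iotk_unitP A : A \in unitmx -> iotk A \in unitmx.
Proof. by case/iotk_unit. Qed.
Lemma iotk_inv A : A \in unitmx -> invmx (iotk A) = iotk (invmx A).
Proof. by case/iotk_unit. Qed.

Definition supp (A : 'M[k]_n) := forall i j : 'I_n, ~~ congr_d d i j -> A i j = 0.

Lemma iotaL_iotk A : supp A -> iotaL d A = iotk A.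
Proof.
move=> sA; apply/matrixP => i j; rewrite !mxE.
have [c|nc] := boolP (congr_d d i j); last by rewrite sA // cst0 !mul0r.
congr (_ * _); congr (_ ^ _).
have -> : (i%:Z - j%:Z) = (qz i - qz j) * d%:Z.
  rewrite /qz {1}(divn_eq i d) {1}(divn_eq j d) (eqP c) !PoszD !PoszM; ring.
by rewrite mulzK // eqz_nat -lt0n.
Qed.

Lemma iotk_diag (r : 'rV[k]_n) : iotk (diag_mx r) = diag_mx (\row_i cst (r 0 i)).
Proof.
apply/matrixP => i j; rewrite !mxE; case: eqP => [->|_].
  by rewrite subrr expr0z mulr1 mulr1n.
by rewrite mulr0n cst0 mul0r.
Qed.

End Iota.

Section Closure.
Variable k : fieldType.
Variable n : nat.

Lemma inv_closed (P : 'M[k]_n -> Prop) :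
  P 1%:M -> (forall A B, P A -> P B -> P (A + B)) ->
  (forall c A, P A -> P (c *: A)) -> (forall A B, P A -> P B -> P (A *m B)) ->
  forall A, P A -> P (invmx A).
Proof.
case: n P => [|n'] P P1' PD' PZ' PM' A' PA.
  by rewrite (thinmx0 (invmx A')) -(thinmx0 A').
have [uA|nuA] := boolP (A' \in unitmx); last by rewrite /invmx (negbTE nuA).
set p := char_poly A'.
have CH := Cayley_Hamilton A'.
have hx : horner_mx A' p = \sum_(i < size p) p`_i *: A' ^+ i.
  rewrite -{1}[p]coefK poly_def raddf_sum; apply: eq_bigr => i _.
  change (horner_mx A' (p`_i *: 'X^i) = p`_i *: A' ^+ i); by rewrite horner_mxZ rmorphXn /= horner_mx_X.
move: CH; rewrite -/p hx size_char_poly big_ord_recl expr0 /=.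
set B := \sum_(i < n'.+1) _ => CH.
have EB : B = A' *m \sum_(i < n'.+1) p`_(bump 0 i) *: A' ^+ i.
  rewrite mulmx_sumr; apply: eq_bigr => i _.
  by rewrite -scalemxAr mulmxE -exprS.
set C := \sum_(i < n'.+1) _ in EB.
have c0 : p`_0 != 0.
  rewrite char_poly_det mulf_eq0 negb_or signr_eq0 /=.
  by rewrite unitmxE unitfE in uA.
have E : A' *m (- (p`_0)^-1 *: C) = 1%:M.
  rewrite -scalemxAr -EB.
  have -> : B = - (p`_0)%:A by apply/eqP; rewrite -addr_eq0 addrC CH.
  by rewrite scaleNr scalerN opprK scalerA mulVf // scale1r.
rewrite (invmx_eq E); apply: (PZ').
have P0 : P 0 by rewrite -(scale0r (1%:M : 'M[k]_n'.+1)); exact: (PZ').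
rewrite /C; elim/big_ind: _ => // i _; apply: (PZ').
elim: (nat_of_ord i) => [|m IH]; first by rewrite expr0.
by rewrite exprS -mulmxE; apply: (PM').
Qed.
End Closure.

Section Preds.
Variable k : fieldType.
Variables n d : nat.

Definition lowt (A : 'M[k]_n) := forall i j : 'I_n, (i < j)%N -> A i j = 0.
Definition uppt (A : 'M[k]_n) := forall i j : 'I_n, (j < i)%N -> A i j = 0.

Lemma congr_refl (i : 'I_n) : congr_d d i i. Proof. exact: eqxx. Qed.
Lemma congr_sym (i j : 'I_n) : congr_d d i j = congr_d d j i.
Proof. by rewrite /congr_d eq_sym. Qed.
Lemma congr_trans (i j l : 'I_n) : congr_d d i l -> congr_d d l j -> congr_d d i j.
Proof. by rewrite /congr_d => /eqP -> /eqP ->. Qed.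

Lemma supp1 : supp d (1%:M : 'M[k]_n).
Proof. move=> i j c; rewrite mxE; case: eqP => // E; by rewrite E congr_refl in c. Qed.
Lemma suppD (A B : 'M[k]_n) : supp d A -> supp d B -> supp d (A + B).
Proof. by move=> sA sB i j c; rewrite mxE sA ?sB ?addr0. Qed.
Lemma suppZ c (A : 'M[k]_n) : supp d A -> supp d (c *: A).
Proof. by move=> sA i j h; rewrite mxE sA ?mulr0. Qed.
Lemma suppM (A B : 'M[k]_n) : supp d A -> supp d B -> supp d (A *m B).
Proof.
move=> sA sB i j c; rewrite mxE big1 // => l _.
have [c1|nc1] := boolP (congr_d d i l); last by rewrite sA ?mul0r.
rewrite sB ?mulr0 //; apply: contra c => c2; exact: congr_trans c1 c2.
Qed.
Lemma supp_inv (A : 'M[k]_n) : supp d A -> supp d (invmx A).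
Proof. apply: inv_closed; [exact: supp1|exact: suppD|exact: suppZ|exact: suppM]. Qed.

Lemma lowt1 : lowt (1%:M : 'M[k]_n).
Proof. move=> i j h; rewrite mxE; case: eqP => // E; by rewrite E ltnn in h. Qed.
Lemma lowtD (A B : 'M[k]_n) : lowt A -> lowt B -> lowt (A + B).
Proof. by move=> sA sB i j c; rewrite mxE sA ?sB ?addr0. Qed.
Lemma lowtZ c (A : 'M[k]_n) : lowt A -> lowt (c *: A).
Proof. by move=> sA i j h; rewrite mxE sA ?mulr0. Qed.
Lemma lowtM (A B : 'M[k]_n) : lowt A -> lowt B -> lowt (A *m B).
Proof.
move=> sA sB i j c; rewrite mxE big1 // => l _.
have [c1|c1] := ltnP i l; first by rewrite sA ?mul0r.
rewrite sB ?mulr0 //; exact: leq_ltn_trans c1 c.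
Qed.
Lemma lowt_inv (A : 'M[k]_n) : lowt A -> lowt (invmx A).
Proof. apply: inv_closed; [exact: lowt1|exact: lowtD|exact: lowtZ|exact: lowtM]. Qed.

Lemma uppt1 : uppt (1%:M : 'M[k]_n).
Proof. move=> i j h; rewrite mxE; case: eqP => // E; by rewrite E ltnn in h. Qed.
Lemma upptD (A B : 'M[k]_n) : uppt A -> uppt B -> uppt (A + B).
Proof. by move=> sA sB i j c; rewrite mxE sA ?sB ?addr0. Qed.
Lemma upptZ c (A : 'M[k]_n) : uppt A -> uppt (c *: A).
Proof. by move=> sA i j h; rewrite mxE sA ?mulr0. Qed.
Lemma upptM (A B : 'M[k]_n) : uppt A -> uppt B -> uppt (A *m B).
Proof.
move=> sA sB i j c; rewrite mxE big1 // => l _.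
have [c1|c1] := ltnP l i; first by rewrite sA ?mul0r.
rewrite sB ?mulr0 //; exact: leq_trans c c1.
Qed.
Lemma uppt_inv (A : 'M[k]_n) : uppt A -> uppt (invmx A).
Proof. apply: inv_closed; [exact: uppt1|exact: upptD|exact: upptZ|exact: upptM]. Qed.

Lemma lowt_diagM (A B : 'M[k]_n) i : lowt A -> lowt B -> (A *m B) i i = A i i * B i i.
Proof.
move=> sA sB; rewrite mxE (bigD1 i) //= big1 ?addr0 // => l nl.
have [c1|c1] := ltnP i l; first by rewrite sA ?mul0r.
rewrite sB ?mulr0 // ltn_neqAle c1 andbT; first [exact: nl | rewrite eq_sym; exact: nl].
Qed.
Lemma uppt_diagM (A B : 'M[k]_n) i : uppt A -> uppt B -> (A *m B) i i = A i i * B i i.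
Proof.
move=> sA sB; rewrite mxE (bigD1 i) //= big1 ?addr0 // => l nl.
have [c1|c1] := ltnP l i; first by rewrite sA ?mul0r.
rewrite sB ?mulr0 // ltn_neqAle c1 andbT; first [exact: nl | rewrite eq_sym; exact: nl].
Qed.

Lemma lowt_unit (A : 'M[k]_n) : lowt A -> (A \in unitmx) = [forall i, A i i != 0].
Proof.
move=> sA; rewrite unitmxE unitfE det_trig; last by apply/is_trig_mxP.
rewrite prodf_seq_neq0; apply/allP/forallP => [h i|h i _]; last exact: h.
exact: h (mem_index_enum i).
Qed.
Lemma uppt_unit (A : 'M[k]_n) : uppt A -> (A \in unitmx) = [forall i, A i i != 0].
Proof.
move=> sA; rewrite -unitmx_tr lowt_unit; last by move=> i j h; rewrite mxE sA.
by apply/forallP/forallP => h i; have := h i; rewrite mxE.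
Qed.
End Preds.

Section Val.
Variable k : fieldType.
Local Notation F := {fraction {poly k}}.
Local Notation s := (svar k).

Lemma L1 (c : int) (p q : {poly k}) : q.[0] != 0 ->
  s ^ c = (tofrac q)^-1 * tofrac p -> (0 <= c) /\ (p.[0] = 0 -> 0 < c).
Proof.
move=> q0 E.
have qn0 : tofrac q != 0 :> F.
  by rewrite tofrac_eq0; apply: contraNneq q0 => ->; rewrite horner0.
case: c E => m E.
  have pE : p = q * 'X^m.
    apply: tofrac_inj; rewrite tofracM -svarXn exprnP E mulrA mulfV // mul1r.
  all: try reflexivity. split; first by [].
  move=> p0; move: p0; rewrite pE hornerM hornerXn.
  case: m {E pE} => [|m]; last by rewrite ltz_nat.
  by rewrite expr0 mulr1 => h; rewrite h eqxx in q0.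
have E' : tofrac p = tofrac q * s ^ Negz m by rewrite E mulrA mulfV // mul1r.
have qE : q = p * 'X^(m.+1).
  apply: tofrac_inj; rewrite tofracM -svarXn E' -mulrA.
  rewrite NegzE -invr_expz -exprnP mulVf ?expf_neq0 ?svar_neq0 // mulr1.
  reflexivity.
by move: q0; rewrite qE hornerM hornerXn expr0n /= mulr0 eqxx.
Qed.

Lemma ev_invZXn (c : k) m : ev_inv (c *: 'X^m) = cst c * s ^ (- (m%:Z)).
Proof.
rewrite /ev_inv.
change ((map_poly (cstm k) (c *: 'X^m)).[s^-1] = cst c * s ^ (- (m%:Z))).
by rewrite map_polyZ map_polyXn hornerZ hornerXn exprVn exprnN.
Qed.

Lemma L2 (c : k) (m : nat) (p : {poly k}) : c != 0 ->
  cst c * s ^+ m = ev_inv p -> m = 0%N /\ p.[0] = c.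
Proof.
move=> c0 E.
set N := size p.
pose r : {poly k} := \sum_(i < N) p`_i *: 'X^(N - i).
have Hev : ev_inv p * s ^+ N = tofrac r.
  rewrite /ev_inv.
  change ((map_poly (cstm k) p).[s^-1] * s ^+ N = tofrac r).
  rewrite horner_coef size_map_poly big_distrl /r rmorph_sum /=.
  apply: eq_bigr => i _; rewrite coef_map /= -mulrA.
  have -> : s ^+ N = s ^+ i * s ^+ (N - i) by rewrite -exprD subnKC // ltnW.
  rewrite (mulrA (s^-1 ^+ i)) exprVn mulVf ?expf_neq0 ?svar_neq0 // mul1r.
  by rewrite svarXn -tofracM mul_polyC.
have Hr : c *: 'X^(m + N) = r.
  apply: tofrac_inj; rewrite -Hev -E -mulrA -exprD svarXn -mul_polyC tofracM.
  reflexivity.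
have := congr1 (fun q : {poly k} => q`_(m + N)) Hr.
rewrite /= coefZ coefXn eqxx mulr1 /r coef_sum.
have -> : \sum_(i < N) (p`_i *: 'X^(N - i))`_(m + N) = (m == 0)%:R * p`_0.
  rewrite -(big_mkord xpredT (fun i => (p`_i *: 'X^(N - i))`_(m + N))).
  have [HN|HN] := posnP N.
    by rewrite HN big_geq // nth_default ?mulr0 // -/N HN.
  rewrite big_ltn // coefZ coefXn subn0.
  rewrite big_nat_cond big1 ?addr0; last first.
    move=> i /andP [/andP [i1 i2] _]; rewrite coefZ coefXn.
    have -> : (m + N == N - i)%N = false by apply/negbTE; lia.
    by rewrite mulr0.
  have -> : (m + N == N)%N = (m == 0)%N by lia.
  by rewrite mulrC.
case: eqP => [-> | _]; last by rewrite mul0r => h; rewrite h eqxx in c0.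
by rewrite mul1r horner_coef0.
Qed.
End Val.

Lemma invmxM' (R : comUnitRingType) m (A B : 'M[R]_m) :
  A \in unitmx -> B \in unitmx -> invmx (A *m B) = invmx B *m invmx A.
Proof.
move=> uA uB; apply: invmx_eq.
by rewrite -mulmxA (mulmxA B) mulmxV // mul1mx mulmxV.
Qed.

Section Tw.
Variable k : fieldType.
Local Notation F := {fraction {poly k}}.
Local Notation s := (svar k).
Variable n : nat.
Variable sigma : 'S_n.
Variable lam : 'I_n -> int.

Local Notation tw := (tW k sigma lam).
Definition twi : 'M[F]_n :=
  diag_mx (\row_i s ^ (- lam i)) *m perm_mx (sigma^-1)%g.

Lemma tw_twi : tw *m twi = 1%:M.
Proof.
rewrite /tW /twi mulmxA -(mulmxA (perm_mx sigma)) mulmx_diag.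
have -> : diag_mx (\row_j ((\row_i s ^ lam i) 0 j * (\row_i s ^ (- lam i)) 0 j))
   = 1%:M :> 'M[F]_n.
  apply/matrixP => i j; rewrite !mxE; case: eqP => [->|]; last by rewrite mulr0n.
  by rewrite -expfzDr ?svar_neq0 // subrr expr0z.
by rewrite mulmx1 -perm_mxM mulgV perm_mx1.
Qed.

Lemma tw_unit : tw \in unitmx.
Proof. exact: (proj1 (mulmx1_unit tw_twi)). Qed.
Lemma invmx_tw : invmx tw = twi.
Proof. exact: invmx_eq tw_twi. Qed.

Lemma tw_conjE (A : 'M[F]_n) a b :
  (tw *m A *m invmx tw) a b = A (sigma a) (sigma b) * s ^ (lam (sigma a) - lam (sigma b)).
Proof.
rewrite invmx_tw /tW /twi !mulmxA.
rewrite -(mulmxA (perm_mx sigma)) -(mulmxA (perm_mx sigma)) -row_permE -col_permE.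
rewrite mul_mx_diag mul_diag_mx.
rewrite /col_perm /row_perm !mxE.
rewrite [s ^ (lam _ - _)]expfzDr ?svar_neq0 //.
by rewrite mulrA [_ * A _ _]mulrC.
Qed.
End Tw.

Section Chain.
Variables n d : nat.
Hypothesis hd : (0 < d)%N.
Variable mu : 'I_n -> int.
Variable rho : 'I_n -> nat.
Hypothesis step : forall i j : 'I_n, (nat_of_ord j = i + d)%N ->
  mu j <= mu i /\ (mu i = mu j -> (rho i < rho j)%N).

Lemma chain (i j : 'I_n) : congr_d d i j -> (i <= j)%N ->
  mu j <= mu i /\ (mu i = mu j -> (i < j)%N -> (rho i < rho j)%N).
Proof.
move=> c lij.
have [m Hm] : exists m, nat_of_ord j = (i + m * d)%N.
  exists ((j - i) %/ d)%N; rewrite divnK ?subnKC //.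
  by rewrite -eqn_mod_dvd // eq_sym.
elim: m j Hm {c lij} => [|m IH] j Hm.
  have -> : j = i by apply: val_inj; rewrite /= Hm mul0n addn0.
  by split => // _; rewrite ltnn.
have lj' : (i + m * d < n)%N by have := ltn_ord j; rewrite Hm mulSn; lia.
pose j' := Ordinal lj'.
have [IH1 IH2] := IH j' erefl.
have hj : nat_of_ord j = (j' + d)%N by rewrite Hm /= mulSn; lia.
have [S1 S2] := @step j' j hj.
split; first exact: le_trans S1 IH1.
move=> E _.
have E1 : mu i = mu j' by apply/eqP; rewrite eq_le IH1 andbT E S1.
have E2 : mu j' = mu j by rewrite -E1.
have [m0|mpos] := posnP m.
  have -> : i = j' by apply: val_inj; rewrite /= m0 mul0n addn0.
  exact: S2 E2.
apply: ltn_trans (IH2 E1 _) (S2 E2).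
rewrite /=; have : (0 < m * d)%N by rewrite muln_gt0 mpos hd.
lia.
Qed.
End Chain.

Section Core.
Variable k : fieldType.
Local Notation F := {fraction {poly k}}.
Local Notation s := (svar k).
Variables n d : nat.
Hypothesis hd : (0 < d)%N.
Variable sigma : 'S_n.
Variable lam : 'I_n -> int.
Local Notation tw := (tW k sigma lam).
Hypothesis hpos : forall (i j : 'I_n), (nat_of_ord j = i + d)%N -> forall a : k,
     in_I (tw *m rootelt i j (-1) a *m invmx tw).

Definition mu (i : 'I_n) : int := lam i + qz d i.
Definition rho (i : 'I_n) : nat := (sigma^-1)%g i.

Lemma step_hpos (i j : 'I_n) : (nat_of_ord j = i + d)%N ->
  mu j <= mu i /\ (mu i = mu j -> (rho i < rho j)%N).
Proof.
move=> hj; have [_ _ _ [P [q [q0 [EM Ptri]]]]] := hpos hj 1.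
set a := (sigma^-1)%g i; set b := (sigma^-1)%g j.
have nij : i != j by apply/eqP => E; move: hj; rewrite -E; lia.
have Eab := congr1 (fun M : 'M[F]_n => M a b) EM; move: Eab.
rewrite /= tw_conjE !mxE /a /b !permKV (negbTE nij) !eqxx /= mulr1 add0r cst1 mul1r.
have -> : s ^ (-1) * s ^ (lam i - lam j) = s ^ (mu i - mu j).
  rewrite -expfzDr ?svar_neq0 //; congr (_ ^ _); rewrite /mu.
  have -> : qz d j = qz d i + 1.
    by rewrite /qz hj -{1}(mul1n d) divnDMl // PoszD.
  ring.
move=> /L1 - /(_ q0) [H1 H2].
split; first by rewrite -subr_ge0.
move=> E; rewrite /rho -/a -/b.
case: (ltngtP a b) => // hab.
  move: (H2 (Ptri _ _ hab)); by rewrite E subrr ltxx.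
have hab' : a = b := val_inj hab.
by move: nij; rewrite -(permKV sigma i) -(permKV sigma j) -/a -/b hab' eqxx.
Qed.

Lemma conj_iotaE (Z : 'M[k]_n) a b :
  (tw *m iotk d Z *m invmx tw) a b =
  cst (Z (sigma a) (sigma b)) * s ^ (mu (sigma a) - mu (sigma b)).
Proof.
rewrite tw_conjE mxE -mulrA -expfzDr ?svar_neq0 //; congr (_ * (_ ^ _)).
rewrite /mu; ring.
Qed.

Definition Pc (Z : 'M[k]_n) : 'M[{poly k}]_n :=
  \matrix_(a, b) (Z (sigma a) (sigma b) *: 'X^(absz (mu (sigma b) - mu (sigma a)))).

Lemma conj_iota_Pc (Z : 'M[k]_n) :
  (forall i j, Z i j != 0 -> mu i <= mu j) ->
  tw *m iotk d Z *m invmx tw = map_mx (@ev_inv k) (Pc Z).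
Proof.
move=> H; apply/matrixP => a b; rewrite conj_iotaE !mxE ev_invZXn.
have [->|nz] := eqVneq (Z (sigma a) (sigma b)) 0; first by rewrite cst0 !mul0r.
congr (_ * (_ ^ _)); have h := H _ _ nz.
rewrite gez0_abs ?subr_ge0 //; by rewrite opprB.
Qed.

Lemma Iminus_iota (Z : 'M[k]_n) : supp d Z -> Z \in unitmx ->
  in_Iminus (tw *m iotk d Z *m invmx tw) <-> lowt Z.
Proof.
move=> sZ uZ; have ch := chain hd step_hpos.
split.
  case=> _ _ [P [EP Ptri]] i j lij.
  apply/eqP; apply: contraT => nz.
  have cij : congr_d d i j by apply: contraT => nc; rewrite sZ ?eqxx in nz.
  have [C1 C2] := ch i j cij (ltnW lij).
  set a := (sigma^-1)%g i; set b := (sigma^-1)%g j.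
  have := congr1 (fun M : 'M[F]_n => M a b) EP.
  rewrite /= conj_iotaE /a /b !permKV mxE.
  have -> : mu i - mu j = (absz (mu i - mu j))%:Z by rewrite gez0_abs // subr_ge0.
  rewrite -exprnP => /L2 - /(_ nz) [m0 P0].
  have Emu : mu i = mu j.
    by apply/eqP; rewrite -subr_eq0 -[mu i - mu j]gez0_abs ?subr_ge0 // m0.
  have := Ptri a b (C2 Emu lij); rewrite -/a -/b P0 => h.
  by rewrite h eqxx in nz.
move=> lZ.
have uA : tw *m iotk d Z *m invmx tw \in unitmx.
  by rewrite unitmx_mul unitmx_inv tw_unit andbT unitmx_mul tw_unit iotk_unitP.
have HZ : forall Z' : 'M[k]_n, supp d Z' -> lowt Z' ->
    forall i j, Z' i j != 0 -> mu i <= mu j.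
  move=> Z' sZ' lZ' i j nz.
  have cij : congr_d d i j by apply: contraT => nc; rewrite sZ' ?eqxx in nz.
  have lji : (j <= i)%N by rewrite leqNgt; apply: contra nz => h; rewrite lZ'.
  by case: (ch j i _ lji) => //; rewrite congr_sym.
split => //.
  exists (Pc (invmx Z)).
  have u1 : tw *m iotk d Z \in unitmx by rewrite unitmx_mul tw_unit iotk_unitP.
  have u2 : invmx tw \in unitmx by rewrite unitmx_inv tw_unit.
  rewrite (invmxM' u1 u2) invmxK (invmxM' (tw_unit k sigma lam) (iotk_unitP d uZ)).
  rewrite mulmxA (iotk_inv d uZ).
  apply: conj_iota_Pc; apply: HZ; [exact: supp_inv | exact: lowt_inv].
exists (Pc Z); split; first exact: conj_iota_Pc (HZ _ sZ lZ).
move=> a b lab; rewrite mxE hornerZ hornerXn.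
have [->|nz] := eqVneq (Z (sigma a) (sigma b)) 0; first by rewrite mul0r.
have cij : congr_d d (sigma a) (sigma b).
  by apply: contraT => nc; rewrite sZ ?eqxx in nz.
have nab : sigma a != sigma b.
  by apply: contraTneq lab => /perm_inj ->; rewrite ltnn.
have lji : (sigma b < sigma a)%N.
  rewrite ltn_neqAle leqNgt eq_sym.
  have -> : (sigma a < sigma b)%N = false by apply/negbTE; apply: contra nz => h; rewrite lZ.
  by rewrite andbT.
rewrite congr_sym in cij.
have [C1 C2] := ch _ _ cij (ltnW lji).
have lt : mu (sigma a) < mu (sigma b).
  rewrite lt_def C1 andbT; apply/eqP => E.
  by have := C2 E lji; rewrite /rho !permK => h; move: (ltn_trans h lab); rewrite ltnn.
have : (0 < absz (mu (sigma b) - mu (sigma a)))%N.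
  by rewrite absz_gt0 subr_eq0 eq_sym (lt_eqF lt).
by case: (absz _) => // m _; rewrite expr0n /= mulr0.
Qed.
End Core.

Section Helpers.
Variable k : fieldType.
Local Notation F := {fraction {poly k}}.
Variables n d : nat.
Hypothesis hd : (0 < d)%N.

Definition diagp (A : 'M[k]_n) := forall i j : 'I_n, i != j -> A i j = 0.

Lemma diagp_lowt A : diagp A -> lowt A.
Proof. by move=> h i j lij; apply: h; rewrite neq_ltn lij. Qed.
Lemma diagp_uppt A : diagp A -> uppt A.
Proof. by move=> h i j lij; apply: h; rewrite neq_ltn lij orbT. Qed.
Lemma diagp_diag (r : 'rV[k]_n) : diagp (diag_mx r).
Proof. by move=> i j nij; rewrite mxE (negbTE nij) mulr0n. Qed.
Lemma diagp_supp A : diagp A -> supp d A.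
Proof. move=> h i j nc; apply: h; apply: contraNneq nc => ->; exact: congr_refl. Qed.

Lemma invmx_perm (t : 'S_n) : invmx (perm_mx t : 'M[k]_n) = perm_mx (t^-1)%g.
Proof. by apply: invmx_eq; rewrite -perm_mxM mulgV perm_mx1. Qed.

Lemma pconjE (t : 'S_n) (A : 'M[k]_n) a b :
  (perm_mx t *m A *m invmx (perm_mx t)) a b = A (t a) (t b).
Proof. by rewrite invmx_perm -row_permE -col_permE !mxE. Qed.

Lemma diagp_pconj (t : 'S_n) (A : 'M[k]_n) : diagp A ->
  diagp (perm_mx t *m A *m invmx (perm_mx t)).
Proof. by move=> h a b nab; rewrite pconjE h // (inj_eq perm_inj). Qed.

Lemma idblockM (A B : 'M[k]_n) : idblock d A -> idblock d B -> idblock d (A *m B).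
Proof.
move=> hA hB i j hij; rewrite mxE.
have [id|id] := boolP (i < d)%N.
  rewrite (bigD1 i) //= big1 ?addr0; last first.
    by move=> l nl; rewrite hA ?id // eq_sym (negbTE nl) mul0r.
  by rewrite hA ?id // eqxx mul1r hB ?id.
have jd : (j < d)%N by move: hij; rewrite (negbTE id).
rewrite (bigD1 j) //= big1 ?addr0; last first.
  by move=> l nl; rewrite hB ?jd ?orbT // (negbTE nl) mulr0.
by rewrite hB ?jd ?orbT // eqxx mulr1 hA ?jd ?orbT.
Qed.

Lemma in_G0_supp (A : 'M[k]_n) : in_G0 d A -> supp d A.
Proof. by case. Qed.

Lemma diag_unit (r : 'rV[k]_n) : (forall i, r 0 i != 0) -> diag_mx r \in unitmx.
Proof.
move=> h; rewrite lowt_unit; last exact: diagp_lowt (diagp_diag r).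
by apply/forallP => i; rewrite mxE eqxx mulr1n.
Qed.

Lemma BLm_iotk (Z : 'M[k]_n) : supp d Z -> Z \in unitmx ->
  in_BLm d (iotk d Z) <-> lowt Z.
Proof.
move=> sZ uZ; split.
  case=> t [u' [[tt [tnz tE]] [[g [[ug sg] [uE [g1 lg]]]] E]]].
  have tE' : t = iotk d (diag_mx (\row_i tt i)).
    rewrite tE iotk_diag; congr diag_mx; apply/matrixP => i j; by rewrite !mxE.
  move: E; rewrite tE' uE (iotaL_iotk hd sg) iotkM => /iotk_inj ->.
  apply: lowtM; first exact: diagp_lowt (diagp_diag _).
  by move=> i j lij; apply: lg.
move=> lZ.
have Znz : forall i, Z i i != 0 by move: uZ; rewrite lowt_unit // => /forallP.
set D := diag_mx (\row_i Z i i).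
set Di := diag_mx (\row_i (Z i i)^-1).
have DDi : D *m Di = 1%:M.
  rewrite mulmx_diag; apply/matrixP => i j; rewrite !mxE mulfV //.
exists (iotk d D), (iotk d (Di *m Z)); split; [|split].
- exists (fun i => Z i i); split => //; rewrite /D iotk_diag.
  by congr diag_mx; apply/matrixP => i j; rewrite !mxE.
- exists (Di *m Z); split.
    split; first by rewrite unitmx_mul uZ andbT diag_unit // => i; rewrite mxE invr_eq0.
    by apply: suppM => //; apply: diagp_supp; exact: diagp_diag.
  split; first by rewrite iotaL_iotk //; apply: suppM => //; apply: diagp_supp; exact: diagp_diag.
  split; first by move=> i; rewrite mul_diag_mx !mxE mulVf.
  by move=> i j lij; rewrite mul_diag_mx !mxE (lZ i j lij) mulr0.
by rewrite iotkM mulmxA DDi mul1mx.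
Qed.
End Helpers.

Unset Implicit Arguments.

Lemma ident1 (k : fieldType) n (W T Ti U V Ui : 'M[k]_n) : W \in unitmx -> T *m Ti = 1%:M ->
  W *m T *m invmx W *m (W *m (Ti *m U *m T *m V *m Ui) *m invmx W) =
  W *m U *m (T *m V) *m Ui *m invmx W.
Proof.
move=> uW TTi; rewrite !mulmxA mulmxKV // -(mulmxA W T Ti) TTi mulmx1.
by rewrite ?mulmxA.
Qed.

Lemma ident2 (k : fieldType) n (W T Ti U V Ui G : 'M[k]_n) : W \in unitmx -> T *m V = G ->
  W *m (Ti *m U *m T *m V *m Ui) *m invmx W =
  W *m Ti *m invmx W *m (W *m U *m G *m Ui *m invmx W).
Proof.
move=> uW TV; rewrite !mulmxA mulmxKV // -TV.
by rewrite ?mulmxA.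
Qed.

Theorem lemma10p4 (k : fieldType) (n d : nat) (hd1 : (1 <= d)%N) (hdn : (d <= n)%N)
  (sigma : 'S_n) (lam : 'I_n -> int)
  (hpos : forall (i j : 'I_n), (nat_of_ord j = i + d)%N -> forall a : k,
     in_I (tW k sigma lam *m rootelt i j (-1) a *m invmx (tW k sigma lam)))
  (w u : 'M[{fraction {poly k}}]_n) (hw : in_WL d w) (hu : in_Upsilon d u) :
  let l := w *m u in
  let x := tW k sigma lam *m l in
  forall g : 'M[{fraction {poly k}}]_n,
    ((in_Bphi d g /\ in_Iminus (x *m g *m invmx x)) <->
     (in_Bphi d g /\ in_BLm d (l *m g *m invmx l))) /\
    ((in_Bphi d g /\ in_BLm d (l *m g *m invmx l)) <->
     (exists t v, [/\ in_Tphi d t, in_Uphi d v, g = t *m v,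
        in_UL d (invmx t *m u *m t *m v *m invmx u) &
        in_ULm d (w *m (invmx t *m u *m t *m v *m invmx u) *m invmx w)])).
Proof.
move=> l x g.
have hd : (0 < d)%N := hd1.
case: hw => tau [[uW sW] wE].
set W := perm_mx tau in uW sW wE.
rewrite (iotaL_iotk hd sW) in wE.
case: hu => U [[uU sU] [uE hpat]].
rewrite (iotaL_iotk hd sU) in uE.
have U1 : forall i, U i i = 1.
  by move=> i; case: (hpat i i) => [->|[]]; rewrite ?eqxx.
have Uup : uppt U.
  move=> i j lji; have nij : i != j by apply/eqP => E; rewrite E ltnn in lji.
  case: (hpat i j) => [->|[_ _ h _]]; first by rewrite (negbTE nij).
  by exfalso; move: h lji; lia.
set Ui := invmx U.
have uUi : Ui \in unitmx by rewrite unitmx_inv.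
have sUi : supp d Ui by exact: supp_inv.
have Uiup : uppt Ui by exact: uppt_inv.
have Ui1 : forall i, Ui i i = 1.
  move=> i; have := congr1 (fun M : 'M[k]_n => M i i) (mulmxV uU).
  by rewrite /= (uppt_diagM i Uup Uiup) U1 mul1r mxE eqxx.
have tU := tw_unit k sigma lam.
have lE : l = iotk d (W *m U) by rewrite /l wE uE iotkM.
have uWU : W *m U \in unitmx by rewrite unitmx_mul uW uU.
have ul : l \in unitmx by rewrite lE iotk_unitP.
have liE : invmx l = iotk d (Ui *m invmx W) by rewrite lE (iotk_inv d uWU) invmxM'.
have xgE : x *m g *m invmx x =
    tW k sigma lam *m (l *m g *m invmx l) *m invmx (tW k sigma lam).
  by rewrite /x (invmxM' tU ul) !mulmxA.
have key : forall G, l *m iotk d G *m invmx l = iotk d (W *m U *m G *m Ui *m invmx W).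
  by move=> G; rewrite liE lE !iotkM !mulmxA.
have Zprops : forall G, supp d G -> G \in unitmx ->
    supp d (W *m U *m G *m Ui *m invmx W) /\ (W *m U *m G *m Ui *m invmx W) \in unitmx.
  move=> G sG uG; split.
    exact: (suppM (suppM (suppM (suppM sW sU) sG) sUi) (supp_inv sW)).
  by rewrite !unitmx_mul uW uU uG uUi unitmx_inv uW.
have P1 : in_Bphi d g -> (in_Iminus (x *m g *m invmx x) <-> in_BLm d (l *m g *m invmx l)).
  case=> G [[uG sG] [gE _]]; rewrite (iotaL_iotk hd sG) in gE.
  rewrite xgE gE key; have [sZ uZ] := Zprops G sG uG.
  rewrite (Iminus_iota hd hpos sZ uZ); exact: iff_sym (BLm_iotk hd sZ uZ).
split.
  split=> -[hB h]; split; [exact: hB | exact: (P1 hB).1 h | exact: hB | exact: (P1 hB).2 h].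
split.
  case=> hB h; case: (hB) => G [[uG sG] [gE [idG upG]]].
  rewrite (iotaL_iotk hd sG) in gE.
  have Gnz : forall i, G i i != 0 by move: uG; rewrite (uppt_unit upG) => /forallP.
  pose T := diag_mx (\row_i G i i).
  pose Ti := diag_mx (\row_i (G i i)^-1).
  have TTi : T *m Ti = 1%:M.
    by rewrite mulmx_diag; apply/matrixP => i j; rewrite !mxE (mulfV (Gnz i)).
  have TiT : Ti *m T = 1%:M.
    by rewrite mulmx_diag; apply/matrixP => i j; rewrite !mxE (mulVf (Gnz i)).
  have uT : T \in unitmx by apply: diag_unit => i; rewrite mxE.
  have uTi : Ti \in unitmx by apply: diag_unit => i; rewrite mxE invr_eq0.
  have sT : supp d T by apply: diagp_supp; exact: diagp_diag.
  have sTi : supp d Ti by apply: diagp_supp; exact: diagp_diag.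
  have iT : invmx T = Ti := invmx_eq TTi.
  have upT : uppt T := diagp_uppt (diagp_diag _).
  have upTi : uppt Ti := diagp_uppt (diagp_diag _).
  pose V := Ti *m G.
  have TV : T *m V = G by rewrite /V mulmxA TTi mul1mx.
  have uV : V \in unitmx by rewrite unitmx_mul uTi uG.
  have sV : supp d V := suppM sTi sG.
  have Vup : uppt V := upptM upTi upG.
  have VE : forall i j, V i j = (G i i)^-1 * G i j by move=> i j; rewrite /V mul_diag_mx !mxE.
  pose Y := Ti *m U *m T *m V *m Ui.
  have sY : supp d Y := suppM (suppM (suppM (suppM sTi sU) sT) sV) sUi.
  have uY : Y \in unitmx.
    rewrite /Y unitmx_mul uUi andbT unitmx_mul uV andbT unitmx_mul uT andbT.
    by rewrite unitmx_mul uTi uU.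
  have Yup : uppt Y := upptM (upptM (upptM (upptM upTi Uup) upT) Vup) Uiup.
  have Y1 : forall i, Y i i = 1.
    move=> i; rewrite /Y.
    rewrite (uppt_diagM i (upptM (upptM (upptM upTi Uup) upT) Vup) Uiup).
    rewrite (uppt_diagM i (upptM (upptM upTi Uup) upT) Vup).
    rewrite (uppt_diagM i (upptM upTi Uup) upT).
    rewrite (uppt_diagM i upTi Uup) VE Ui1 U1 !mxE eqxx !mulr1n.
    by rewrite !mulr1 (mulVf (Gnz i)) mulr1.
  exists (iotk d T), (iotk d V); split.
  - exists T; split; first exact: (conj uT sT).
    split; first exact: esym (iotaL_iotk hd sT).
    split; last exact: diagp_diag.
    move=> i j hij; rewrite !mxE; have [E|nij] := eqVneq i j.
      by rewrite -E in hij *; rewrite mulr1n (idG i i hij) eqxx.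
    by rewrite mulr0n.
  - exists V; split; first exact: (conj uV sV).
    split; first exact: esym (iotaL_iotk hd sV).
    split.
      move=> i j hij; rewrite VE; have [E|nij] := eqVneq i j.
        rewrite -E in hij *.
        have Gii : G i i = 1 by rewrite (idG i i hij) eqxx.
        by rewrite Gii invr1 mulr1.
      by rewrite (idG i j hij) (negbTE nij) mulr0n mulr0.
    split; first by move=> i; rewrite VE (mulVf (Gnz i)).
    exact: Vup.
  - by rewrite gE iotkM TV.
  - rewrite (iotk_inv d uT) iT uE (iotk_inv d uU) !iotkM -/Ui -/Y.
    exists Y; split; first exact: (conj uY sY).
    split; first exact: esym (iotaL_iotk hd sY).
    exact: (conj Y1 Yup).
  - rewrite (iotk_inv d uT) iT uE (iotk_inv d uU) !iotkM -/Ui -/Y wE (iotk_inv d uW) !iotkM.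
    have sWY : supp d (W *m Y *m invmx W) := suppM (suppM sW sY) (supp_inv sW).
    exists (W *m Y *m invmx W); split.
      split; last exact: sWY.
      by rewrite unitmx_mul unitmx_inv uW andbT unitmx_mul uW uY.
    split; first exact: esym (iotaL_iotk hd sWY).
    split; first by move=> a; rewrite pconjE Y1.
    have lZ : lowt (W *m U *m G *m Ui *m invmx W).
      have [sZ uZ] := Zprops G sG uG.
      by move: h; rewrite gE key (BLm_iotk hd sZ uZ); exact: id.
    rewrite /Y (@ident2 k n W T Ti U V Ui G uW TV).
    exact: lowtM (diagp_lowt (diagp_pconj tau (diagp_diag _))) lZ.
case=> t [v [[T [[uT sT] [tE [idT dT]]]] [V [[uV sV] [vE [idV [V1 upV]]]]] gE hUL hULm]].
rewrite (iotaL_iotk hd sT) in tE; rewrite (iotaL_iotk hd sV) in vE.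
have sG : supp d (T *m V) := suppM sT sV.
have uG : T *m V \in unitmx by rewrite unitmx_mul uT uV.
have gE' : g = iotk d (T *m V) by rewrite gE tE vE iotkM.
have hB : in_Bphi d g.
  exists (T *m V); split; first exact: (conj uG sG).
  split; first by rewrite (iotaL_iotk hd sG); exact: gE'.
  split; first exact: idblockM idT idV.
  exact: upptM (diagp_uppt dT) upV.
split; first exact: hB.
case: hULm => g' [[ug' sg'] [E' [_ lg']]].
move: E'; rewrite tE vE uE wE (iotk_inv d uT) (iotk_inv d uU) (iotk_inv d uW) !iotkM.
rewrite (iotaL_iotk hd sg') => /iotk_inj E'.
have lY : lowt (W *m (invmx T *m U *m T *m V *m Ui) *m invmx W).
  by rewrite E'; exact: lg'.
rewrite gE' key; have [sZ uZ] := Zprops (T *m V) sG uG.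
apply/(BLm_iotk hd sZ uZ).
rewrite -(@ident1 k n W T (invmx T) U V Ui uW (mulmxV uT)).
exact: lowtM (diagp_lowt (diagp_pconj tau dT)) lY.
Qed.
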